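(* Let $(t_i)_{i\in\mathbb{N}}$ be a sequence of real numbers that are algebraically independent over $\mathbb{Q}$, and let $A=\{P_{i,j} : i,j\in\mathbb{N},\ i<j\}\subseteq\mathbb{R}^2$, where $P_{i,j} = (t_i + t_j,\ t_i^2 + t_it_j + t_j^2)$. Then for every finite subset $P\subseteq A$ there exists $P'\subseteq P$ with $|P'|\ge |P|/2$ such that no three points of $P'$ are collinear. *)

(* Defs.v *)
From Stdlib Require Import Reals.
From HB Require Import structures.
From mathcomp Require Import all_boot all_order all_algebra.
From mathcomp Require Import Rstruct.
From mathcomp Require Import mpoly.

Set Implicit Arguments.
Unset Strict Implicit.
Unset Printing Implicit Defensive.

Import GRing.Theory Num.Theory.
Local Open Scope ring_scope.

Definition alg_indep_Q (t : nat -> R) : Prop :=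
  forall (n : nat) (f : 'I_n -> nat), injective f ->
  forall p : {mpoly rat[n]}, p != 0 ->
    (map_mpoly (ratr : rat -> R) p).@[fun i => t (f i)] != 0.

Definition Pt (t : nat -> R) (i j : nat) : R * R :=
  (t i + t j, t i ^+ 2 + t i * t j + t j ^+ 2).

Definition inA (t : nat -> R) (x : R * R) : Prop :=
  exists i j : nat, (i < j)%N /\ x = Pt t i j.

Definition collinear (p q r : R * R) : Prop :=
  exists a b c : R, (a != 0 \/ b != 0) /\
    a * p.1 + b * p.2 = c /\ a * q.1 + b * q.2 = c /\ a * r.1 + b * r.2 = c.

Definition no_three_collinear (S : seq (R * R)) : Prop :=
  forall p q r, p \in S -> q \in S -> r \in S ->
    p != q -> q != r -> p != r -> ~ collinear p q r.

(* Main.v *)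
Require Import Defs.
From Stdlib Require Import Reals.
From HB Require Import structures.
From mathcomp Require Import all_boot all_order all_algebra.
From mathcomp Require Import Rstruct.
From mathcomp Require Import mpoly.
From mathcomp Require Import ring zify.

Definition wv (i : nat) : nat := nth 0 [:: 0; 1; 2; 3; 4; 7] i.
Definition L6 (a b c d e f : nat) :=
  let x0 := a + b in let x1 := c + d in let x2 := e + f in
  let y0 := a * a + a * b + b * b in let y1 := c * c + c * d + d * d in
  let y2 := e * e + e * f + f * f in
  x1 * y2 + x2 * y0 + x0 * y1.
Definition R6 (a b c d e f : nat) :=
  let x0 := a + b in let x1 := c + d in let x2 := e + f in
  let y0 := a * a + a * b + b * b in let y1 := c * c + c * d + d * d in
  let y2 := e * e + e * f + f * f in
  x1 * y0 + x0 * y2 + x2 * y1.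
Definition Lnat (m : nat -> nat) := L6 (m 0) (m 1) (m 2) (m 3) (m 4) (m 5).
Definition Rnat (m : nat -> nat) := R6 (m 0) (m 1) (m 2) (m 3) (m 4) (m 5).
Definition samep (a b c d : nat) := ((a == c) && (b == d)) || ((a == d) && (b == c)).
Definition condh (h : nat -> nat) :=
  [&& h 0 != h 1, h 2 != h 3, h 4 != h 5, ~~ samep (h 0) (h 1) (h 2) (h 3),
      ~~ samep (h 0) (h 1) (h 4) (h 5) & ~~ samep (h 2) (h 3) (h 4) (h 5)].
Definition condk (h : nat -> nat) (k : nat -> bool) :=
  [&& k 0 != k 1, k 2 != k 3, k 4 != k 5 &
   all (fun s => all (fun s' => (h s == h s') ==> (k s == k s')) (iota 0 6)) (iota 0 6)].
Definition tup6 {T} (a0 a1 a2 a3 a4 a5 : T) (i : nat) : T :=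
  match i with 0 => a0 | 1 => a1 | 2 => a2 | 3 => a3 | 4 => a4 | _ => a5 end.
Definition bl := [:: true; false].
Definition allk (h : nat -> nat) :=
  all (fun k0 => all (fun k1 => all (fun k2 => all (fun k3 => all (fun k4 => all (fun k5 =>
    ~~ condk h (tup6 k0 k1 k2 k3 k4 k5)) bl) bl) bl) bl) bl) bl.
Definition body (h : nat -> nat) :=
  if condh h then (Lnat (wv \o h) != Rnat (wv \o h)) || allk h else true.
Definition i6 := iota 0 6.
Definition chk := all (fun h0 => all (fun h1 => all (fun h2 => all (fun h3 => all (fun h4 => all (fun h5 =>
    body (tup6 h0 h1 h2 h3 h4 h5)) (iota 0 6)) (iota 0 5)) (iota 0 4)) (iota 0 3)) (iota 0 2)) (iota 0 1).
Lemma chk_ok : chk = true. Proof. reflexivity. Qed.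

Lemma chk_spec (h : nat -> nat) (k : nat -> bool) :
  (forall s, s < 6 -> h s <= s) -> condh h -> condk h k ->
  Lnat (wv \o h) != Rnat (wv \o h).
Proof.
move=> hlt ch ck.
have mi s : s < 6 -> h s \in iota 0 s.+1 by move=> /hlt; rewrite mem_iota.
have := chk_ok; rewrite /chk.
move=> /allP /(_ _ (mi 0 isT)) /allP /(_ _ (mi 1 isT)) /allP /(_ _ (mi 2 isT))
  /allP /(_ _ (mi 3 isT)) /allP /(_ _ (mi 4 isT)) /allP /(_ _ (mi 5 isT)).
rewrite /body.
change (condh (tup6 (h 0) (h 1) (h 2) (h 3) (h 4) (h 5))) with (condh h).
rewrite ch.
change (Lnat (wv \o tup6 (h 0) (h 1) (h 2) (h 3) (h 4) (h 5))) with (Lnat (wv \o h)).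
change (Rnat (wv \o tup6 (h 0) (h 1) (h 2) (h 3) (h 4) (h 5))) with (Rnat (wv \o h)).
case/orP => // /allP.
have mb (b : bool) : b \in bl by case: b.
move=> /(_ _ (mb (k 0))) /allP /(_ _ (mb (k 1))) /allP /(_ _ (mb (k 2)))
  /allP /(_ _ (mb (k 3))) /allP /(_ _ (mb (k 4))) /allP /(_ _ (mb (k 5))).
have -> : condk (tup6 (h 0) (h 1) (h 2) (h 3) (h 4) (h 5)) (tup6 (k 0) (k 1) (k 2) (k 3) (k 4) (k 5))
  = condk h k by [].
by rewrite ck.
Qed.

Section Helpers.
Import GRing.Theory Num.Theory.
Local Open Scope ring_scope.

Definition D6 {Rg : comNzRingType} (a b c d e f : Rg) : Rg :=
  let x0 := a + b in let x1 := c + d in let x2 := e + f in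
  let y0 := a ^+ 2 + a * b + b ^+ 2 in let y1 := c ^+ 2 + c * d + d ^+ 2 in
  let y2 := e ^+ 2 + e * f + f ^+ 2 in
  (x1 - x0) * (y2 - y0) - (x2 - x0) * (y1 - y0).

Definition Dg {Rg : comNzRingType} (z : nat -> Rg) := D6 (z 0%N) (z 1%N) (z 2%N) (z 3%N) (z 4%N) (z 5%N).

Lemma Dg_morph (R1 R2 : comNzRingType) (phi : {rmorphism R1 -> R2}) z :
  phi (Dg z) = Dg (phi \o z).
Proof. by rewrite /Dg /D6 /= !(rmorphB, rmorphD, rmorphM, rmorphXn). Qed.

Lemma Dg_ext (Rg : comNzRingType) (z z' : nat -> Rg) :
  (forall s, (s < 6)%N -> z s = z' s) -> Dg z = Dg z'.
Proof. by move=> E; rewrite /Dg !E. Qed.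

Lemma Dg_nat (m : nat -> nat) :
  Dg (fun s => (m s)%:R : rat) = (Lnat m)%:R - (Rnat m)%:R.
Proof.
rewrite /Dg /D6 /Lnat /Rnat /L6 /R6 /=.
rewrite !natrD !natrM; ring.
Qed.

Lemma collinear_D (t : nat -> R) a b c d e f :
  collinear (Pt t a b) (Pt t c d) (Pt t e f) ->
  D6 (t a) (t b) (t c) (t d) (t e) (t f) = 0.
Proof.
case=> [p [q [r [nz [E1 [E2 E3]]]]]]; move: E1 E2 E3; rewrite /Pt /=.
set x0 := t a + t b; set x1 := t c + t d; set x2 := t e + t f.
set y0 := _ + _ + t b ^+ 2; set y1 := _ + _ + t d ^+ 2; set y2 := _ + _ + t f ^+ 2.
move=> E1 E2 E3.
have F2 : p * (x1 - x0) + q * (y1 - y0) = 0.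
  have H : p * x1 + q * y1 - (p * x0 + q * y0) = 0 by rewrite E1 E2 subrr.
  by rewrite -H; ring.
have F3 : p * (x2 - x0) + q * (y2 - y0) = 0.
  have H : p * x2 + q * y2 - (p * x0 + q * y0) = 0 by rewrite E1 E3 subrr.
  by rewrite -H; ring.
pose D := (x1 - x0) * (y2 - y0) - (x2 - x0) * (y1 - y0).
have -> : D6 (t a) (t b) (t c) (t d) (t e) (t f) = D by [].
have Hp : p * D = 0.
  have -> : p * D = (y2 - y0) * (p * (x1 - x0) + q * (y1 - y0))
     - (y1 - y0) * (p * (x2 - x0) + q * (y2 - y0)) by rewrite /D; ring.
  by rewrite F2 F3 !mulr0 subrr.
have Hq : q * D = 0.
  have -> : q * D = (x1 - x0) * (p * (x2 - x0) + q * (y2 - y0))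
     - (x2 - x0) * (p * (x1 - x0) + q * (y1 - y0)) by rewrite /D; ring.
  by rewrite F2 F3 !mulr0 subrr.
case: nz => nz.
  by move/eqP: Hp; rewrite mulf_eq0 (negbTE nz) => /eqP.
by move/eqP: Hq; rewrite mulf_eq0 (negbTE nz) => /eqP.
Qed.

Definition var (n : nat) (i : nat) : {mpoly rat[n]} :=
  odflt 0 (omap (fun j : 'I_n => 'X_j) (insub i)).

Lemma varE n i (hi : (i < n)%N) : var n i = 'X_(Ordinal hi).
Proof. by rewrite /var insubT. Qed.

Fixpoint fdup (l : seq nat) : seq nat :=
  if l is x :: l' then x :: [seq y <- fdup l' | y != x] else [::].

Lemma mem_fdup y l : (y \in fdup l) = (y \in l).
Proof.
elim: l => //= x l IH; rewrite !inE mem_filter IH.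
by case: (y =P x).
Qed.

Lemma uniq_fdup l : uniq (fdup l).
Proof.
elim: l => //= x l IH; by rewrite mem_filter eqxx /= filter_uniq.
Qed.

Lemma index_filter_le (a : pred nat) y s : a y -> (index y (filter a s) <= index y s)%N.
Proof.
move=> ay; elim: s => //= z s IH; case: ifP => az /=; case: (z =P y) => // zy.
  by move: az; rewrite zy ay.
by apply: leq_trans IH _.
Qed.

Lemma index_fdup y l : (index y (fdup l) <= index y l)%N.
Proof.
elim: l => //= x l IH; case: (x =P y) => // xy.
rewrite ltnS; apply: leq_trans _ IH; apply: index_filter_le.
by apply/eqP => e; apply: xy.
Qed.

Lemma index_nth_le (y : nat) l i : (i < size l)%N -> nth 0%N l i = y -> (index y l <= i)%N.
Proof.
elim: l i => [|z l IH] [|i] //=; case: (z =P y) => // zy hi e;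
  first [by case: zy | by rewrite ltnS; apply: IH].
Qed.

Lemma key (t : nat -> R) (ht : alg_indep_Q t) (g : nat -> nat) (c : nat -> bool) :
  condh g -> [&& c (g 0%N) != c (g 1%N), c (g 2%N) != c (g 3%N) & c (g 4%N) != c (g 5%N)] ->
  Dg (t \o g) != 0.
Proof.
move=> chg ccut.
pose U := fdup (map g (iota 0 6)).
pose n := size U.
pose hs s := index (g s) U.
have memU s : (s < 6)%N -> g s \in U.
  by move=> s6; rewrite mem_fdup map_f // mem_iota.
have nthU s : (s < 6)%N -> nth 0%N U (hs s) = g s.
  by move=> s6; rewrite nth_index // memU.
have hn s : (s < 6)%N -> (hs s < n)%N by move=> s6; rewrite index_mem memU.
have hlt s : (s < 6)%N -> (hs s <= s)%N.
  move=> s6; apply: leq_trans (index_fdup _ _) _.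
  apply: index_nth_le; first by rewrite size_map size_iota.
  by rewrite (nth_map 0%N) ?size_iota // nth_iota.
have E i j : (i < 6)%N -> (j < 6)%N -> (hs i == hs j) = (g i == g j).
  move=> i6 j6; apply/eqP/eqP => [e|e]; last by rewrite /hs e.
  by rewrite -(nthU i i6) -(nthU j j6) e.
have ch : condh hs.
  rewrite /condh /samep. by rewrite !E.
have ck : condk hs (c \o g).
  move: ccut => /and3P [c1 c2 c3].
  apply/and4P; split => //.
  apply/allP => s; rewrite mem_iota => /andP [_ s6].
  apply/allP => s'; rewrite mem_iota => /andP [_ s'6].
  by rewrite /= E //; apply/implyP => /eqP ->.
have LR := @chk_spec hs (c \o g) hlt ch ck.
pose p : {mpoly rat[n]} := Dg (fun s => var n (hs s)).
have ev2 : p.@[fun j => (wv j)%:R] != 0.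
  rewrite /p Dg_morph.
  rewrite (@Dg_ext _ _ (fun s => (wv (hs s))%:R)); last first.
    by move=> s s6 /=; rewrite (@varE n (hs s) (hn s s6)) mevalXU.
  by rewrite (Dg_nat (wv \o hs)) subr_eq0 eqr_nat.
have pnz : p != 0 by apply: contraNneq ev2 => ->; rewrite meval0.
pose f (j : 'I_n) := nth 0%N U j.
have finj : injective f.
  move=> j1 j2 /eqP; rewrite /f nth_uniq ?uniq_fdup // => /eqP; exact: val_inj.
have := ht n f finj p pnz.
rewrite /p Dg_morph Dg_morph.
rewrite (@Dg_ext _ _ (t \o g)) // => s s6 /=.
by rewrite (@varE n (hs s) (hn s s6)) map_mpolyX mevalXU /f /= nthU.
Qed.

End Helpers.

Lemma count_split (T : Type) (a p : pred T) (s : seq T) :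
  count a s = count a (filter p s) + count a (filter (predC p) s).
Proof.
elim: s => //= x s ->; case: (p x) => /=; case: (a x) => /=.
- by rewrite addnA.
- by [].
- by rewrite addnCA.
- by [].
Qed.

Lemma coloring N (L : seq (nat * nat)) :
  (forall e, e \in L -> e.1 < e.2 < N) ->
  exists c : nat -> bool, size L <= 2 * count (fun e => c e.1 != c e.2) L.
Proof.
elim: N L => [|N IH] L HL.
  case: L HL => [|e L] HL; first by exists xpredT.
  by have := HL e (mem_head _ _); rewrite ltn0 andbF.
pose p := fun e : nat * nat => e.2 != N.
pose L0 := filter p L.
pose L1 := filter (predC p) L.
have H0 e : e \in L0 -> e.1 < e.2 < N.
  rewrite mem_filter => /andP [pe eL]; have /andP [h1 h2] := HL e eL.
  move: pe; rewrite /p h1 /= ltn_neqAle => ->; by rewrite -ltnS.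
have [c Hc] := IH L0 H0.
pose m1 := count (fun e : nat * nat => c e.1) L1.
pose m0 := count (fun e : nat * nat => ~~ c e.1) L1.
have Hm : m1 + m0 = size L1 by rewrite /m1 /m0 count_predC.
pose b := ~~ (size L1 <= m1.*2).
pose c' := fun i => if i == N then b else c i.
exists c'.
have szL : size L = size L0 + size L1.
  by rewrite -!count_predT (count_split _ predT p).
rewrite (count_split _ _ p) -/L0 -/L1 szL.
have E0 : count (fun e => c' e.1 != c' e.2) L0 = count (fun e => c e.1 != c e.2) L0.
  apply: eq_in_count => e /H0 /andP [h1 h2].
  by rewrite /c' (ltn_eqF h2) (ltn_eqF (ltn_trans h1 h2)).
have E1 : count (fun e => c' e.1 != c' e.2) L1 = count (fun e : nat * nat => c e.1 != b) L1.
  apply: eq_in_count => e; rewrite mem_filter => /andP [pe eL].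
  have /andP [h1 h2] := HL e eL.
  move: pe; rewrite /= /p negbK => /eqP e2.
  have h1' : e.1 < N by rewrite -e2.
  by rewrite /c' e2 eqxx (ltn_eqF h1').
rewrite E0 E1.
have Hb : size L1 <= 2 * count (fun e : nat * nat => c e.1 != b) L1.
  rewrite /b; case: (leqP (size L1) m1.*2) => h /=.
    rewrite (_ : count _ L1 = m1); first lia.
    by apply: eq_count => e /=; case: (c e.1).
  rewrite (_ : count _ L1 = m0); first lia.
  by apply: eq_count => e /=; case: (c e.1).
lia.
Qed.

Lemma pairs_of (t : nat -> R) (P : seq (R * R)) :
  (forall x, x \in P -> inA t x) ->
  exists L : seq (nat * nat), P = map (fun e => Pt t e.1 e.2) L /\
    (forall e, e \in L -> e.1 < e.2).
Proof.
elim: P => [|x P IH] H; first by exists [::].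
have [|L [-> HL]] := IH; first by move=> y yP; apply: H; rewrite inE yP orbT.
have [i [j [ij ->]]] := H x (mem_head _ _).
exists ((i, j) :: L); split => // e; rewrite inE => /orP [/eqP -> //|]; exact: HL.
Qed.

Lemma nsamep (e f : nat * nat) : e.1 < e.2 -> f.1 < f.2 -> e != f ->
  ~~ samep e.1 e.2 f.1 f.2.
Proof.
case: e f => [a b] [c d] /= ab cd ne; rewrite /samep; apply/negP.
case/orP => /andP [/eqP ac /eqP bd].
  by move: ne; rewrite ac bd eqxx.
by move: cd; rewrite -ac -bd => /(ltn_trans ab); rewrite ltnn.
Qed.

Theorem mainTheorem3 (t : nat -> R) (ht : alg_indep_Q t)
  (P : seq (R * R)) (hPu : uniq P) (hPA : forall x, x \in P -> inA t x) :
  exists P' : seq (R * R),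
    [/\ uniq P', {subset P' <= P}, (size P <= 2 * size P')%N
      & no_three_collinear P'].
Proof.
have [L [PL hL]] := @pairs_of t P hPA.
pose N := (\max_(e <- L) e.2).+1.
have [c Hc] : exists c : nat -> bool, size L <= 2 * count (fun e => c e.1 != c e.2) L.
  apply: (@coloring N) => e eL; rewrite hL //=.
  by rewrite ltnS; apply: leq_bigmax_seq.
pose pt := fun e : nat * nat => Pt t e.1 e.2.
pose L' := filter (fun e : nat * nat => c e.1 != c e.2) L.
have sub : subseq (map pt L') P by rewrite PL map_subseq // filter_subseq.
exists (map pt L'); split.
- exact: subseq_uniq sub hPu.
- exact: mem_subseq sub.
- by rewrite PL !size_map size_filter.
move=> p q r /mapP [e1 e1L ->] /mapP [e2 e2L ->] /mapP [e3 e3L ->] n12 n23 n13 col.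
move: e1L e2L e3L; rewrite !mem_filter => /andP [c1 /hL h1] /andP [c2 /hL h2] /andP [c3 /hL h3].
have d (e f : nat * nat) : pt e != pt f -> e != f by apply: contra => /eqP ->.
pose g := nth 0 [:: e1.1; e1.2; e2.1; e2.2; e3.1; e3.2].
have ch : condh g.
  rewrite /condh /= (ltn_eqF h1) (ltn_eqF h2) (ltn_eqF h3) /=.
  by rewrite (@nsamep e1 e2 h1 h2 (d _ _ n12)) (@nsamep e1 e3 h1 h3 (d _ _ n13)) (@nsamep e2 e3 h2 h3 (d _ _ n23)).
have cc : [&& c (g 0) != c (g 1), c (g 2) != c (g 3) & c (g 4) != c (g 5)].
  by apply/and3P; split.
move/eqP: (@key t ht g c ch cc); apply.
exact: collinear_D col.
Qed.
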